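(* Let $H$ be a compact subgroup of a locally compact group $G$, and let $l$ be a length function on $G$ which is bounded on $H$. Then there exists a length function $l'$ on $G$ such that: (i) $l$ and $l'$ are equivalent; (ii) the kernel $\{g\in G: l'(g)=0\}$ of $l'$ contains $H$, i.e. $l'$ is a length function on the pair $(G,H)$; (iii) if $l$ is locally bounded (resp. proper), then $l'$ is locally bounded (resp. proper), both as a length function on $G$ and as a length function on the pair $(G,H)$.
   Context: A length function on a locally compact group $G$ is a Borel function $l:G\to[0,\infty)$ with $l(e)=0$, $l(g)=l(g^{-1})$ and $l(gh)\le l(g)+l(h)$ for all $g,h$. A length function on the pair $(G,H)$ is a length function on $G$ vanishing on $H$ (it is then bi-$H$-invariant and induces a function on $H\backslash G$). A length function is locally bounded if it is bounded on every compact subset of $G$ (resp. the induced function on $H\backslash G$ is bounded on every compact subset of $H\backslash G$), and proper if $l^{-1}([0,n])$ is relatively compact in $G$ (resp. its image is relatively compact in $H\backslash G$) for every $n$. Two length functions $l_1,l_2$ are equivalent if there are constants $c_0,c_1\ge0$ with $l_2\le c_1l_1+c_0$ and $l_1\le c_1l_2+c_0$ on $G$. *)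

(* Defs.v *)
From HB Require Import structures.
From mathcomp Require Import all_boot all_order all_algebra.
From mathcomp Require Import all_classical all_reals all_analysis.
Set Implicit Arguments. Unset Strict Implicit. Unset Printing Implicit Defensive.
Import Order.TTheory GRing.Theory Num.Theory.
Local Open Scope classical_set_scope.
Local Open Scope ring_scope.

Definition is_lc_group (G : topologicalType) (mul : G -> G -> G) (inv : G -> G)
    (e : G) : Prop :=
  (forall x y z, mul x (mul y z) = mul (mul x y) z) /\
  (forall x, mul e x = x /\ mul x e = x) /\
  (forall x, mul (inv x) x = e /\ mul x (inv x) = e) /\
  continuous (fun p : G * G => mul p.1 p.2) /\
  continuous inv /\
  locally_compact [set: G] /\ hausdorff_space G.

Definition is_compact_subgroup (G : topologicalType) (mul : G -> G -> G)
    (inv : G -> G) (e : G) (H : set G) : Prop :=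
  [/\ H e, (forall x y, H x -> H y -> H (mul x y)),
      (forall x, H x -> H (inv x)) & compact H].

Definition borel_fun (G : topologicalType) (R : realType) (l : G -> R) : Prop :=
  forall B : set R, measurable B -> <<s [set U : set G | open U] >> (l @^-1` B).

Definition length_fun (G : topologicalType) (R : realType) (mul : G -> G -> G)
    (inv : G -> G) (e : G) (l : G -> R) : Prop :=
  [/\ borel_fun l, (forall g, 0 <= l g), l e = 0,
      (forall g, l g = l (inv g)) &
      (forall g h, l (mul g h) <= l g + l h)].

Definition equiv_length (G : Type) (R : realType) (l1 l2 : G -> R) : Prop :=
  exists c0 c1 : R, [/\ 0 <= c0, 0 <= c1,
    (forall g, l2 g <= c1 * l1 g + c0) & (forall g, l1 g <= c1 * l2 g + c0)].

Definition loc_bounded (G : topologicalType) (R : realType) (l : G -> R) : Prop :=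
  forall K : set G, compact K -> exists M : R, forall g, K g -> l g <= M.

Definition proper_len (G : topologicalType) (R : realType) (l : G -> R) : Prop :=
  forall n : nat, compact (closure (l @^-1` [set x | x <= n%:R])).

(* ---- on the quotient H\G (right cosets Hg), described through G ----
   Open sets of H\G (quotient topology) correspond to open subsets of G
   that are left-H-saturated; a subset of H\G corresponds to its (saturated)
   preimage in G. *)
Definition saturated (G : Type) (mul : G -> G -> G) (H : set G) (A : set G) :=
  forall h g, H h -> A g -> A (mul h g).

Definition qopen (G : topologicalType) (mul : G -> G -> G) (H : set G)
    (U : set G) := open U /\ saturated mul H U.

(* the image of A in H\G is compact *)
Definition qcompact (G : topologicalType) (mul : G -> G -> G) (H : set G)
    (A : set G) : Prop :=
  forall (I : Type) (F : I -> set G), (forall i, qopen mul H (F i)) ->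
    A `<=` \bigcup_(i in [set: I]) F i ->
    exists D : set I, finite_set D /\ A `<=` \bigcup_(i in D) F i.

(* preimage in G of the closure in H\G of the image of A *)
Definition qclosure (G : topologicalType) (mul : G -> G -> G) (H : set G)
    (A : set G) : set G :=
  [set g | forall U, qopen mul H U -> U g -> U `&` A !=set0].

(* induced function on H\G bounded on compact subsets of H\G *)
Definition loc_bounded_pair (G : topologicalType) (R : realType)
    (mul : G -> G -> G) (H : set G) (l : G -> R) : Prop :=
  forall S : set G, saturated mul H S -> qcompact mul H S ->
    exists M : R, forall g, S g -> l g <= M.

(* the image of l^-1([0,n]) is relatively compact in H\G *)
Definition proper_len_pair (G : topologicalType) (R : realType)
    (mul : G -> G -> G) (H : set G) (l : G -> R) : Prop :=
  forall n : nat, qcompact mul H (qclosure mul H (l @^-1` [set x | x <= n%:R])).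

(* Main.v *)
Require Import Defs.
From HB Require Import structures.
From mathcomp Require Import all_boot all_order all_algebra.
From mathcomp Require Import all_classical all_reals all_analysis.
From mathcomp Require finmap.
From mathcomp Require Import lra.
Import Order.TTheory GRing.Theory Num.Theory.
Local Open Scope classical_set_scope.
Local Open Scope ring_scope.
Set Implicit Arguments. Unset Strict Implicit. Unset Printing Implicit Defensive.

Section Baire.
Variable T : topologicalType.

Definition ndense (F : set T) := closed F /\ forall U, open U -> U `<=` F -> U = set0.
Definition meager (A : set T) :=
  exists F : nat -> set T, (forall n, ndense (F n)) /\ A `<=` \bigcup_n F n.

Lemma meager_sub A B : A `<=` B -> meager B -> meager A.
Proof. by move=> AB [F [nF BF]]; exists F; split => // x /AB /BF. Qed.

Lemma ndense0 : ndense set0.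
Proof. by split; [exact: closed0| move=> U _; rewrite subset0]. Qed.

Lemma meager_bigcup (A : nat -> set T) : (forall n, meager (A n)) ->
  meager (\bigcup_n A n).
Proof.
move=> mA; have [F hF] := choice mA.
exists (fun k => if @unpickle (nat * nat)%type k is Some p then F p.1 p.2 else set0).
split.
  move=> k; case: (unpickle k) => [[n m]|]; last exact: ndense0.
  by have [+ _] := hF n; apply.
move=> x [n _ /(proj2 (hF n))] [m _ Fx].
by exists (pickle (n, m)) => //; rewrite pickleK.
Qed.

Lemma meagerU A B : meager A -> meager B -> meager (A `|` B).
Proof.
move=> mA mB; apply: (@meager_sub _ (\bigcup_n (if n is 0 then A else B))).
  by move=> x [Ax|Bx]; [exists 0%N|exists 1%N].
by apply: meager_bigcup => -[|n].
Qed.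

Lemma ndense_meager N : ndense N -> meager N.
Proof.
move=> nN; exists (fun n => if n is 0 then N else set0); split.
  by case => [|n] //; exact: ndense0.
by move=> x Nx; exists 0%N.
Qed.

Lemma meager0 : meager set0.
Proof. by exists (fun=> set0); split => [n|//]; exact: ndense0. Qed.

Lemma open_sub_interior (U A : set T) : open U -> U `<=` A -> U `<=` A°.
Proof.
move=> oU UA x Ux; rewrite /interior; apply: filterS UA _.
exact: open_nbhs_nbhs.
Qed.

Lemma ndense_bd C : closed C -> ndense (C `\` C°).
Proof.
move=> cC; split.
  by rewrite setDE; apply: closedI => //; apply: open_closedC; exact: open_interior.
move=> U oU UC; apply/seteqP; split => // x Ux.
have [Cx nCx] := UC _ Ux; apply: nCx.
exact: (@open_sub_interior U C oU (fun y Uy => (UC y Uy).1) x Ux).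
Qed.

Hypothesis hT : hausdorff_space T.
Hypothesis lcT : locally_compact [set: T].

Lemma baire_step V F : open V -> V !=set0 -> ndense F ->
  exists V', [/\ open V', V' !=set0, compact (closure V') & closure V' `<=` V `\` F].
Proof.
move=> oV [v Vv] [cF iF].
have oVF : open (V `\` F) by rewrite setDE; apply: openI => //; exact: closed_openC.
have [x [Vx nFx]] : V `\` F !=set0.
  apply: contrapT => VF0.
  have V0 : V = set0.
    by apply: iF => // y Vy; apply: contrapT => Fy; apply: VF0; exists y.
  by move: Vv; rewrite V0.
have [K Kx [cK clK]] := @lcT x I.
have Kn : nbhs x K by move: Kx; rewrite withinET.
have [i ix ci] := compact_regular hT cK Kn (open_nbhs_nbhs (conj oVF (conj Vx nFx))).
have sub1 : closure (interior (i `&` K)) `<=` (V `\` F) `&` K.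
  apply: subset_trans (closureS (@interior_subset _ _)) _.
  move=> y cy; split; first by apply: ci; apply: closureS cy => z [].
  have -> : K = closure K by exact/closure_id.
  by apply: closureS cy => z [].
exists (interior (i `&` K)); split.
- exact: open_interior.
- by exists x; rewrite /interior; apply: filterI.
- apply: (subclosed_compact _ cK); first exact: closed_closure.
  by move=> y /sub1 [].
- by move=> y /sub1 [].
Qed.

Lemma baire W : open W -> W !=set0 -> ~ meager W.
Proof.
move=> oW W0 [F [nF WF]].
pose P (V : set T) := open V /\ V !=set0.
have : forall p : nat * set T, exists V', P p.2 -> [/\ P V', compact (closure V')
    & closure V' `<=` p.2 `\` F p.1].
  move=> [n V]; have [PV|nPV] := pselect (P V); last by exists V.
  have [V' [? ? ? ?]] := @baire_step V (F n) PV.1 PV.2 (nF n).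
  by exists V' => _; split.
move=> /choice [g hg].
pose vs := fix vs n := if n is m.+1 then g (m, vs m) else W.
have Pvs : forall n, P (vs n).
  by elim => [|n IH] //=; have [] := hg (n, vs n) IH.
have hvs : forall n, compact (closure (vs n.+1)) /\ closure (vs n.+1) `<=` vs n `\` F n.
  by move=> n; have [] := hg (n, vs n) (Pvs n).
have dec : forall n m, (n <= m)%N -> vs m `<=` vs n.
  move=> n m /subnK <-; elim: (m - n)%N => [|k IH] //=.
  by move=> x /subset_closure /(proj2 (hvs _)) [/IH].
pose Fl := filter_from [set: nat] (fun n => vs n.+1).
have FF : ProperFilter Fl.
  apply: filter_from_proper; last by move=> n _; exact: (Pvs n.+1).2.
  apply: filter_from_filter; first by exists 0%N.
  move=> i j _ _; exists (maxn i j) => // x Vx; split; apply: (dec _ _ _ x Vx).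
    by rewrite ltnS leq_maxl.
  by rewrite ltnS leq_maxr.
have [p [_ clp]] := (proj1 (hvs 0%N)) Fl FF (ex_intro2 _ _ 0%N I (@subset_closure _ _)).
have inall : forall n, closure (vs n.+1) p.
  by move=> n B Bp; apply: clp => //; exists n.
have [n _ Fnp] := WF p (proj1 (proj2 (hvs 0%N) p (inall 0%N))).
by have [_] := proj2 (hvs n) p (inall n).
Qed.

End Baire.
Arguments meager {T}. Arguments ndense {T}.

Section BPsec.
Variable T : topologicalType.

Definition BP (A : set T) := exists U, open U /\ meager ((A `\` U) `|` (U `\` A)).

Lemma BP_sigma : sigma_algebra setT BP.
Proof.
split.
- exists set0; split; first exact: open0.
  by apply: (@meager_sub _ _ set0) => [x [[]|[]]|]; [| |exact: meager0].
- move=> A [U [oU mU]]; exists (interior (~` U)); split; first exact: open_interior.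
  apply: (@meager_sub _ _ (((A `\` U) `|` (U `\` A)) `|` (~` U `\` (~` U)°))).
    move=> x [[a nix]|[ix nAx]].
    + have nAx : ~ A x by case: a.
      have [Ux|nUx] := pselect (U x).
        by left; right; split.
      by right; split.
    + left; left; split; last exact: (interior_subset ix).
      by apply: contrapT => nA; apply: nAx.
  apply: meagerU => //; apply: ndense_meager; apply: ndense_bd.
  exact: open_closedC.
- move=> A hA; have [U hU] := choice hA.
  exists (\bigcup_n U n); split; first by apply: bigcup_open => n _; exact: (hU n).1.
  apply: (@meager_sub _ _ (\bigcup_n ((A n `\` U n) `|` (U n `\` A n)))).
    move=> x [h|h].
      have [h1 nUx] := h; have [n _ Ax] := h1.
      by exists n => //; left; split => // Unx; apply: nUx; exists n.
    have [h1 nAx] := h; have [n _ Ux] := h1.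
    by exists n => //; right; split => // Anx; apply: nAx; exists n.
  by apply: meager_bigcup => n; exact: (hU n).2.
Qed.

Lemma borel_BP A : <<s [set U : set T | open U] >> A -> BP A.
Proof.
apply: smallest_sub; first exact: BP_sigma.
move=> U oU; exists U; split => //.
by apply: (@meager_sub _ _ set0) => [x [[]|[]]|]; [| |exact: meager0].
Qed.

Lemma meager_homeo (phi psi : T -> T) : continuous phi -> continuous psi ->
  (forall x, psi (phi x) = x) -> (forall x, phi (psi x) = x) ->
  forall M, meager M -> meager (phi @^-1` M).
Proof.
move=> cphi cpsi K1 K2 M [F [nF MF]].
exists (fun n => phi @^-1` F n); split; last by move=> x /MF.
move=> n; have [cF iF] := nF n; split.
  by apply: closed_comp => // x _; exact: cphi.
move=> V oV VF.
have h : psi @^-1` V = set0.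
  apply: iF; first by apply: open_comp => // x _; exact: cpsi.
  by move=> y /= Vy; have := VF _ Vy; rewrite /preimage /= K2.
rewrite -subset0 => x Vx.
have : (psi @^-1` V) (phi x) by rewrite /preimage /= K1.
by rewrite h.
Qed.

End BPsec.
Arguments BP {T}.


Lemma finite_bound (R : realType) (T : choiceType) (D : set T) (u : T -> R) :
  finite_set D -> exists B, forall x, D x -> u x <= B.
Proof.
move=> /finite_fsetP [X ->].
suff : forall s : seq T, exists B, forall x, x \in s -> u x <= B.
  by move=> /(_ (finmap.enum_fset X)) [B hB]; exists B => x /= xX; apply: hB.
elim => [|a s [B hB]]; first by exists 0.
exists (Num.max (u a) B) => x; rewrite in_cons => /orP [/eqP ->|/hB h].
  by rewrite le_max lexx.
by rewrite le_max h orbT.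
Qed.

Lemma borel_lsc (R : realType) (T : topologicalType) (u : T -> R) :
  (forall t, open [set g | t < u g]) -> borel_fun u.
Proof.
move=> hu B mB.
have : (smallest (sigma_algebra setT) (@ocitv R)) B := mB.
move: B {mB}; apply: smallest_sub.
  have [s0 sC sU] := smallest_sigma_algebra setT [set U : set T | open U].
  split.
  - by rewrite /= preimage_set0.
  - move=> A hA; rewrite /=.
    have -> : u @^-1` (setT `\` A) = setT `\` (u @^-1` A).
      by apply/seteqP; split => x /=.
    exact: (sC).
  - move=> A hA; rewrite /= preimage_bigcup; exact: sU.
move=> A [[a b] _ <-] /=.
have -> : u @^-1` `]a, b]%classic = setT `\` (~` [set g | a < u g] `|` [set g | b < u g]).
  apply/seteqP; split => g /=; rewrite in_itv /=.
    by move=> /andP [h1 h2]; split => // -[]; [|rewrite ltNge h2].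
  move=> [_ h]; apply/andP; split.
    by apply: contrapT => h1; apply: h; left.
  by rewrite leNgt; apply/negP => h1; apply: h; right.
have [s0 sC sU] := smallest_sigma_algebra setT [set U : set T | open U].
apply: (sC).
rewrite -bigcup2E; apply: (sU) => -[|[|n]] /=.
- rewrite -[X in <<s _ >> X]setTD; apply: (sC); apply: sub_sigma_algebra; exact: hu.
- by apply: sub_sigma_algebra; exact: hu.
- exact: s0.
Qed.

Unset Implicit Arguments.
Section Grp.
Variables (R : realType) (G : topologicalType) (mul : G -> G -> G) (inv : G -> G) (e : G).
Hypothesis hG : is_lc_group mul inv e.

Lemma gA x y z : mul x (mul y z) = mul (mul x y) z.
Proof. by case: hG => A _. Qed.
Lemma g1x x : mul e x = x.
Proof. by case: hG => _ [/(_ x) []]. Qed.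
Lemma gx1 x : mul x e = x.
Proof. by case: hG => _ [/(_ x) []]. Qed.
Lemma gVx x : mul (inv x) x = e.
Proof. by case: hG => _ [_ [/(_ x) []]]. Qed.
Lemma gxV x : mul x (inv x) = e.
Proof. by case: hG => _ [_ [/(_ x) []]]. Qed.
Lemma gKl x y : mul (inv x) (mul x y) = y.
Proof. by rewrite gA gVx g1x. Qed.
Lemma gKr x y : mul x (mul (inv x) y) = y.
Proof. by rewrite gA gxV g1x. Qed.
Lemma gKVr x y : mul (mul x y) (inv y) = x.
Proof. by rewrite -gA gxV gx1. Qed.
Lemma invK x : inv (inv x) = x.
Proof. by rewrite -[RHS](gKl (inv x)) gVx gx1. Qed.
Lemma invM x y : inv (mul x y) = mul (inv y) (inv x).
Proof.
rewrite -[RHS]gx1 -(gxV (mul x y)) [mul (inv y) (inv x)]lock gA.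
by rewrite -lock -(gA (inv y)) (gA (inv x)) gVx g1x gVx g1x.
Qed.

Lemma cont_mul : continuous (fun p : G * G => mul p.1 p.2).
Proof. by case: hG => _ [_ [_ [? _]]]. Qed.
Lemma cont_inv : continuous inv.
Proof. by case: hG => _ [_ [_ [_ [? _]]]]. Qed.
Lemma hausG : hausdorff_space G.
Proof. by case: hG => _ [_ [_ [_ [_ [_ ?]]]]]. Qed.
Lemma lcG : locally_compact [set: G].
Proof. by case: hG => _ [_ [_ [_ [_ [? _]]]]]. Qed.

Lemma cont_l a : continuous (mul a).
Proof.
move=> y.
have -> : mul a = (fun p : G * G => mul p.1 p.2) \o (fun z => (a, z)) by [].
apply: continuous_comp; last exact: cont_mul.
by apply: cvg_pair; [exact: cvg_cst| exact: cvg_id].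
Qed.
Lemma cont_r a : continuous (mul^~ a).
Proof.
move=> y.
have -> : mul^~ a = (fun p : G * G => mul p.1 p.2) \o (fun z => (z, a)) by [].
apply: continuous_comp; last exact: cont_mul.
by apply: cvg_pair; [exact: cvg_id| exact: cvg_cst].
Qed.

Lemma mul_nbhs x y N : nbhs (mul x y) N ->
  exists P Q, [/\ nbhs x P, nbhs y Q & forall p q, P p -> Q q -> N (mul p q)].
Proof.
move=> Nn; have := cont_mul (x, y) _ Nn => /= -[[P Q] /= [Px Qy] PQ].
by exists P, Q; split => // p q Pp Qq; exact: (PQ (p, q)).
Qed.

Lemma open_pre (f : G -> G) (U : set G) : continuous f -> open U -> open (f @^-1` U).
Proof. by move=> cf oU; apply: open_comp => // x _; exact: cf. Qed.


Variable l : G -> R.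
Hypothesis hl : length_fun mul inv e l.

Lemma l_ge0 x : 0 <= l x. Proof. by case: hl. Qed.
Lemma l_e : l e = 0. Proof. by case: hl. Qed.
Lemma l_inv x : l (inv x) = l x. Proof. by case: hl => _ _ _ h _; rewrite [RHS]h. Qed.
Lemma l_tri x y : l (mul x y) <= l x + l y. Proof. by case: hl. Qed.
Lemma l_borel : borel_fun l. Proof. by case: hl. Qed.

Lemma meas_le (r : R) : measurable [set x : R | x <= r].
Proof.
rewrite (_ : [set x | x <= r] = `]-oo, r]%classic); first exact: measurable_itv.
by apply/seteqP; split => x /=; rewrite in_itv.
Qed.

Lemma archi_l x : exists n : nat, l x <= n%:R.
Proof. by exists (Num.Def.archi_bound (l x)); apply/ltW/archi_boundP/l_ge0. Qed.

Lemma loc_bdd_e : exists O C, [/\ open O, O e, 0 <= C & forall x, O x -> l x <= C].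
Proof.
pose L (n : nat) := l @^-1` [set x | x <= n%:R].
have BPL n : BP (L n) by apply: borel_BP; apply: l_borel; exact: meas_le.
have [U hU] := choice BPL.
have [n [u Uu]] : exists n, U n !=set0.
  apply: contrapT => hn.
  apply: (baire (hausG) (lcG) openT (ex_intro _ e I)).
  apply: (@meager_sub _ _ (\bigcup_n ((L n `\` U n) `|` (U n `\` L n)))).
    move=> x _; have [n hn'] := archi_l x.
    exists n => //; left; split => // Unx; apply: hn; by exists n, x.
  by apply: meager_bigcup => k; exact: (hU k).2.
exists [set x | U n (mul u x)], (n%:R + n%:R); split.
- exact: (open_pre _ _ (cont_l u) (hU n).1).
- by rewrite /= gx1.
- by rewrite addr_ge0.
move=> x Ux.
have [z [Az Azx]] : exists z, L n z /\ L n (mul z (inv x)).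
  apply: contrapT => nz.
  apply: (baire (hausG) (lcG) (W := U n `&` [set z | U n (mul z (inv x))])).
  - apply: openI; first exact: (hU n).1.
    exact: (open_pre _ _ (cont_r (inv x)) (hU n).1).
  - by exists (mul u x); split => //=; rewrite gKVr.
  apply: (@meager_sub _ _ (((L n `\` U n) `|` (U n `\` L n)) `|`
     ((mul^~ (inv x)) @^-1` ((L n `\` U n) `|` (U n `\` L n))))).
    move=> z [Uz Uzx]; have [Lz|nLz] := pselect (L n z); last by left; right; split.
    right; rewrite /preimage /=; right; split => // Lzx; apply: nz; by exists z.
  apply: meagerU; first exact: (hU n).2.
  apply: (meager_homeo (cont_r (inv x)) (cont_r x)) => //; first last.
  - exact: (hU n).2.
  - by move=> y /=; rewrite gKVr.
  - by move=> y /=; rewrite -gA gVx gx1.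
have -> : x = mul (inv (mul z (inv x))) z.
  by rewrite invM invK -gA gVx gx1.
apply: le_trans (l_tri _ _) _; rewrite l_inv.
by rewrite addrC; apply: lerD.
Qed.



Variable H : set G.
Hypothesis hH : is_compact_subgroup mul inv e H.
Variable M : R.
Hypothesis hM : forall h, H h -> l h <= M.

Lemma H_e : H e. Proof. by case: hH. Qed.
Lemma H_mul x y : H x -> H y -> H (mul x y). Proof. by case: hH => _ h _ _; exact: h. Qed.
Lemma H_inv x : H x -> H (inv x). Proof. by case: hH => _ _ h _; exact: h. Qed.
Lemma H_cpt : compact H. Proof. by case: hH. Qed.
Lemma H_closed : closed H. Proof. exact: (compact_closed hausG H_cpt). Qed.
Lemma M_ge0 : 0 <= M. Proof. by apply: le_trans _ (hM _ H_e); rewrite l_e. Qed.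

Definition S g := [set t : R | exists h h' N, [/\ H h, H h', nbhs (mul (mul h g) h') N
   & forall y, N y -> t <= l y]].
Definition f g := sup (S g).

Lemma S0 g : S g 0.
Proof.
exists e, e, setT; split => //; [exact: H_e|exact: H_e|exact: filterT|].
by move=> y _; exact: l_ge0.
Qed.

Lemma S_ub g t : S g t -> t <= l g + (M + M).
Proof.
move=> [h [h' [N [Hh Hh' Nn Nb]]]].
apply: le_trans (Nb _ (nbhs_singleton Nn)) _.
apply: le_trans (l_tri _ _) _; have h1 := hM _ Hh'; have h2 := hM _ Hh.
have h3 := l_tri h g; lra.
Qed.

Lemma has_supS g : has_sup (S g).
Proof. by split; [exists 0; exact: S0|exists (l g + (M + M)) => t /S_ub]. Qed.

Lemma f_ub g : f g <= l g + (M + M).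
Proof. by apply: ge_sup; [exists 0; exact: S0| move=> t /S_ub]. Qed.

Lemma f_ge0 g : 0 <= f g.
Proof. exact: sup_upper_bound (has_supS g) _ (S0 g). Qed.

Lemma S_f g t : S g t -> t <= f g.
Proof. exact: sup_upper_bound (has_supS g) _. Qed.

Lemma S_left h0 g : H h0 -> S (mul h0 g) `<=` S g.
Proof.
move=> H0 t [h [h' [N [Hh Hh' Nn Nb]]]].
exists (mul h h0), h', N; split => //; first exact: H_mul.
by rewrite -(gA h h0 g).
Qed.

Lemma S_right h0 g : H h0 -> S (mul g h0) `<=` S g.
Proof.
move=> H0 t [h [h' [N [Hh Hh' Nn Nb]]]].
exists h, (mul h0 h'), N; split => //; first exact: H_mul.
by rewrite gA -(gA h g h0).
Qed.

Lemma f_left h0 g : H h0 -> f (mul h0 g) <= f g.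
Proof.
move=> H0; apply: ge_sup; first by exists 0; exact: S0.
by move=> t /(S_left _ _ H0) /S_f.
Qed.

Lemma f_right h0 g : H h0 -> f (mul g h0) <= f g.
Proof.
move=> H0; apply: ge_sup; first by exists 0; exact: S0.
by move=> t /(S_right _ _ H0) /S_f.
Qed.

Lemma S_inv g : S g `<=` S (inv g).
Proof.
move=> t [h [h' [N [Hh Hh' Nn Nb]]]].
exists (inv h'), (inv h), (inv @^-1` N); split; [exact: H_inv|exact: H_inv| |].
  have -> : mul (mul (inv h') (inv g)) (inv h) = inv (mul (mul h g) h').
    by rewrite !invM gA.
  apply: cont_inv; by rewrite invK.
by move=> y Ny; rewrite -l_inv; exact: Nb.
Qed.

Lemma f_inv g : f (inv g) = f g.
Proof.
rewrite /f; congr sup; apply/seteqP; split; last exact: S_inv.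
by move=> t /S_inv; rewrite invK.
Qed.

Lemma f_lsc t : open [set g | t < f g].
Proof.
rewrite openE => g /= tg.
have ft : 0 < f g - t by rewrite subr_gt0.
have [s [h [h' [N [Hh Hh' Nn Nb]]]] ts] := sup_adherent ft (has_supS g).
have ts2 : f g - (f g - t) < s := ts.
have kc := continuous_comp (cont_l h g) (cont_r h' (mul h g)).
have kN : nbhs g ((mul^~ h' \o mul h) @^-1` N°) := kc (N°) (nbhs_interior Nn).
rewrite /interior; apply: filterS kN => y /= Ny.
have /S_f sf : S y s by exists h, h', N.
lra.
Qed.

Lemma f_sub g k : f (mul g k) <= f g + f k.
Proof.
apply: ge_sup; first by exists 0; exact: S0.
move=> t [h [h' [N [Hh Hh' Nn Nb]]]].
apply/ler_addgt0Pr => eps eps0.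
have : nbhs (mul (mul h g) (mul k h')) N.
  by rewrite gA -(gA h g k).
move=> /mul_nbhs [P [Q [Pn Qn PQ]]].
have [p [Pp lp]] : exists p, P p /\ l p < f g + eps / 2.
  apply: contrapT => np.
  have /S_f sf : S g (f g + eps / 2).
    exists h, e, P; split => //; [exact: H_e|by rewrite gx1|].
    move=> y Py; rewrite leNgt; apply/negP => ly; apply: np; by exists y.
  lra.
have [q [Qq lq]] : exists q, Q q /\ l q < f k + eps / 2.
  apply: contrapT => nq.
  have /S_f sf : S k (f k + eps / 2).
    exists e, h', Q; split => //; [exact: H_e|by rewrite g1x|].
    move=> y Qy; rewrite leNgt; apply/negP => ly; apply: nq; by exists y.
  lra.
have h1 := Nb _ (PQ _ _ Pp Qq); have h2 := l_tri p q; lra.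
Qed.

Definition l' g := if pselect (H g) then 0 else f g.

Lemma l'_on g : H g -> l' g = 0.
Proof. by rewrite /l'; case: pselect. Qed.
Lemma l'_off g : ~ H g -> l' g = f g.
Proof. by rewrite /l'; case: pselect. Qed.
Lemma l'_ge0 g : 0 <= l' g.
Proof. by rewrite /l'; case: pselect => [Hg|nHg] /= //; exact: f_ge0. Qed.
Lemma l'_ub g : l' g <= l g + (M + M).
Proof.
rewrite /l'; case: pselect => [Hg|nHg] /=; last exact: f_ub.
by have h1 := l_ge0 g; have h2 := M_ge0; lra.
Qed.

Lemma l'_lsc t : open [set g | t < l' g].
Proof.
have [t0|t0] := ltP t 0.
  have -> : [set g | t < l' g] = setT.
    by apply/seteqP; split => g // _ /=; apply: lt_le_trans t0 (l'_ge0 g).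
  exact: openT.
have -> : [set g | t < l' g] = ~` H `&` [set g | t < f g].
  apply/seteqP; split => g /=.
    rewrite /l'; case: pselect => Hg /= tl; last by split.
    by move: t0; rewrite leNgt tl.
  by move=> [nH tf]; rewrite l'_off.
apply: openI; [exact: closed_openC H_closed|exact: f_lsc].
Qed.

Lemma l'_tri g k : l' (mul g k) <= l' g + l' k.
Proof.
have [Hgk|nHgk] := pselect (H (mul g k)).
  by rewrite l'_on // addr_ge0 // l'_ge0.
rewrite l'_off //.
have [Hg|nHg] := pselect (H g); have [Hk|nHk] := pselect (H k).
- by exfalso; apply: nHgk; exact: H_mul.
- by rewrite (l'_on g) // (l'_off k) // add0r; exact: f_left.
- by rewrite (l'_on k) // (l'_off g) // addr0; exact: f_right.
- by rewrite !l'_off //; exact: f_sub.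
Qed.

Lemma l'_inv g : l' g = l' (inv g).
Proof.
have [Hg|nHg] := pselect (H g).
  by rewrite !l'_on //; exact: H_inv.
rewrite (l'_off g) // l'_off ?f_inv //.
by move=> /H_inv; rewrite invK.
Qed.

Lemma l'_len : length_fun mul inv e l'.
Proof.
split.
- by apply: borel_lsc; exact: l'_lsc.
- exact: l'_ge0.
- exact: l'_on H_e.
- exact: l'_inv.
- exact: l'_tri.
Qed.

Lemma l'_bi h g : H h -> l' (mul h g) = l' g.
Proof.
move=> Hh; apply/eqP; rewrite eq_le; apply/andP; split.
  by apply: le_trans (l'_tri _ _) _; rewrite l'_on // add0r.
have -> : g = mul (inv h) (mul h g) by rewrite gKl.
apply: le_trans (l'_tri _ _) _; rewrite gKl l'_on ?add0r //; exact: H_inv.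
Qed.

Lemma compact_qcompact X : compact X -> qcompact mul H X.
Proof.
move=> cX I F qF XF; apply: contrapT => nfin.
pose Fl := filter_from [set D : set I | finite_set D]
  (fun D => X `\` \bigcup_(i in D) F i).
have FF : ProperFilter Fl.
  apply: filter_from_proper.
    apply: filter_from_filter; first by exists set0; exact: finite_set0.
    move=> D1 D2 f1 f2; exists (D1 `|` D2); first by rewrite /= finite_setU.
    move=> y [Xy ny]; split; split => // -[i Di Fy]; apply: ny; exists i => //.
      by left.
    by right.
  move=> D fD; apply: contrapT => ne; apply: nfin; exists D; split => //.
  by move=> y Xy; apply: contrapT => ny; apply: ne; exists y.
have FX : Fl X by exists set0; [exact: finite_set0|move=> y []].
have [p [Xp clp]] := cX Fl FF FX.
have [i _ Fip] := XF p Xp.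
have Fin : nbhs p (F i) by apply: open_nbhs_nbhs; split => //; exact: (qF i).1.
have [y [[Xy ny] Fy]] := clp _ _ (ex_intro2 _ _ [set i] (finite_set1 i) (fun z h => h)) Fin.
by apply: ny; exists i.
Qed.

Section OC.
Variables (O : set G) (C : R).
Hypothesis hOC : [/\ open O, O e, 0 <= C & forall x, O x -> l x <= C].

Lemma C_ge0 : 0 <= C. Proof. by case: hOC. Qed.

Lemma f_lb g : l g <= f g + C.
Proof.
case: hOC => oO Oe C0 OC.
have : S g (l g - C).
  exists e, e, [set y | O (mul (inv g) y)]; split; [exact: H_e|exact: H_e| |].
    rewrite g1x gx1; apply: open_nbhs_nbhs; split.
      exact: (open_pre _ _ (cont_l (inv g)) oO).
    by rewrite /= gVx.
  move=> y /= Oy.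
  have -> : l g = l (mul y (mul (inv y) g)) by rewrite gKr.
  have h1 := l_tri y (mul (inv y) g).
  have h2 : l (mul (inv y) g) <= C by rewrite -[g]invK -invM l_inv; apply: OC.
  lra.
move=> /S_f h; lra.
Qed.

Lemma l_le_l' g : l g <= l' g + (M + C).
Proof.
have h0 := C_ge0; have h1 := M_ge0.
have [Hg|nHg] := pselect (H g).
  by rewrite l'_on // add0r; have h2 := hM _ Hg; lra.
by rewrite l'_off //; have h2 := f_lb g; lra.
Qed.

Lemma equiv_l' : equiv_length l l'.
Proof.
have h0 := C_ge0; have h1 := M_ge0.
exists (M + M + C), 1; split => //.
- by rewrite !addr_ge0.
- by move=> g; rewrite mul1r; have h2 := l'_ub g; lra.
- by move=> g; rewrite mul1r; have h2 := l_le_l' g; lra.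
Qed.

Lemma loc_pair : loc_bounded_pair mul H l'.
Proof.
case: hOC => oO Oe C0 OC.
move=> Sx satS qS.
pose F (g : G) := [set y | exists h, H h /\ O (mul (inv g) (mul h y))].
have qF : forall g, qopen mul H (F g).
  move=> g; split.
  - rewrite openE => y [h [Hh Oy]].
    have oP : open ((mul (inv g) \o mul h) @^-1` O).
      apply: open_pre oO => z.
      exact: (continuous_comp (cont_l h z) (cont_l (inv g) (mul h z))).
    rewrite /interior; apply: filterS (open_nbhs_nbhs (conj oP Oy)) => z Oz.
    by exists h.
  - move=> h0 y Hh0 [h [Hh Oy]]; exists (mul h (inv h0)); split.
      by apply: H_mul => //; exact: H_inv.
    by rewrite -gA gKl.
have cov : Sx `<=` \bigcup_(g in [set: G]) F g.
  move=> y _; exists y => //; exists e; split; first exact: H_e.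
  by rewrite g1x gVx.
have [D [fD SD]] := qS G F qF cov.
have [B hB] := finite_bound l' fD.
exists (B + (C + (M + M))) => y /SD [g Dg [h [Hh Oz]]].
rewrite -(l'_bi h y Hh).
have -> : mul h y = mul g (mul (inv g) (mul h y)) by rewrite gKr.
apply: le_trans (l'_tri _ _) _.
have h1 := hB g Dg; have h2 := l'_ub (mul (inv g) (mul h y)); have h3 := OC _ Oz; lra.
Qed.

Lemma loc_l' : loc_bounded l -> loc_bounded l' /\ loc_bounded_pair mul H l'.
Proof.
move=> lb; split; last exact: loc_pair.
move=> K cK; have [B hB] := lb K cK; exists (B + (M + M)) => g Kg.
by have h1 := l'_ub g; have h2 := hB g Kg; lra.
Qed.

Lemma proper_l' : proper_len l -> proper_len l' /\ proper_len_pair mul H l'.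
Proof.
move=> pl.
have key : forall n : nat, exists N : nat,
    l' @^-1` [set x | x <= n%:R] `<=` l @^-1` [set x | x <= N%:R].
  move=> n; have ge : 0 <= n%:R + (M + C) :> R.
    by rewrite !addr_ge0 // ?M_ge0 ?C_ge0.
  exists (Num.Def.archi_bound (n%:R + (M + C))) => g /= lg.
  have h1 := l_le_l' g; have h2 := archi_boundP ge; lra.
split.
  move=> n; have [N sub] := key n.
  apply: (subclosed_compact _ (pl N)); [exact: closed_closure|exact: closureS].
move=> n; have [N sub] := key n.
set A := l' @^-1` _.
set K := closure (l @^-1` [set x | x <= N%:R]).
have cK : compact K := pl N.
pose HK := [set (fun p : G * G => mul p.1 p.2) x | x in H `*` K].
have cHK : compact HK.
  apply: continuous_compact; last exact: compact_setX H_cpt cK.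
  exact: continuous_subspaceT cont_mul.
have clHK : closed HK := compact_closed hausG cHK.
have AK : A `<=` HK.
  move=> z Az; exists (e, z); last by rewrite /= g1x.
  split; first exact: H_e.
  by apply: subset_closure; exact: sub.
have sat : saturated mul H (~` HK).
  move=> h0 y Hh0 nHKy HKy; apply: nHKy.
  case: HKy => [[a b] [Ha Kb] /= eq].
  exists (mul (inv h0) a, b); first by split => //; apply: H_mul => //; exact: H_inv.
  by rewrite /= -gA eq gKl.
have qAHK : qclosure mul H A `<=` HK.
  move=> g qg; apply: contrapT => nHKg.
  have [z [nz Az]] := qg (~` HK) (conj (closed_openC clHK) sat) nHKg.
  by apply: nz; exact: AK.
have clq : closed (qclosure mul H A).
  move=> g cg U [oU sU] Ug.
  have [y [qy Uy]] := cg U (open_nbhs_nbhs (conj oU Ug)).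
  exact: qy U (conj oU sU) Uy.
apply: compact_qcompact.
exact: (subclosed_compact clq cHK qAHK).
Qed.

End OC.

End Grp.

Theorem lemma2p8 (R : realType) (G : topologicalType) (mul : G -> G -> G)
  (inv : G -> G) (e : G) (H : set G) (l : G -> R) :
  is_lc_group mul inv e ->
  is_compact_subgroup mul inv e H ->
  length_fun mul inv e l ->
  (exists M : R, forall h, H h -> l h <= M) ->
  exists l' : G -> R,
    [/\ length_fun mul inv e l',
        equiv_length l l',
        (forall h, H h -> l' h = 0),
        (loc_bounded l -> loc_bounded l' /\ loc_bounded_pair mul H l') &
        (proper_len l -> proper_len l' /\ proper_len_pair mul H l')].
Proof.
move=> hG hH hl [M hM].
have [Ob [C hOC]] := loc_bdd_e R G mul inv e hG l hl.
exists (l' R G mul l H); split.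
- exact: (l'_len R G mul inv e hG l hl H hH M hM).
- exact: (equiv_l' R G mul inv e hG l hl H hH M hM Ob C hOC).
- move=> h Hh; exact: (l'_on R G mul l H h Hh).
- exact: (loc_l' R G mul inv e hG l hl H hH M hM Ob C hOC).
- exact: (proper_l' R G mul inv e hG l hl H hH M hM Ob C hOC).
Qed.
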